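(* Let $p_s\in(0,1)$, $p_f=1-p_s$, and let $p_{-1},p_0,p_1\in[0,1]$ with $p_{-1}+p_0+p_1=1$. Let $(h(t))$ be i.i.d. with $\mathbb{P}[h(t)=1]=p_s$, $\mathbb{P}[h(t)=0]=p_f$, and let $(\delta(t))$ be i.i.d., independent of $(h(t))$, with $\mathbb{P}[\delta(t)=k]=p_k$ for $k\in\{-1,0,1\}$. Define the positive-integer-valued process $$\Delta(t)=\begin{cases}\max\{1,\delta(t)+1\}, & h(t)=1,\\ \max\{1,\ \Delta(t-1)+\delta(t)-\delta(t-1)+1\}, & h(t)=0.\end{cases}$$ Let $F=1-p_s(1-p_{-1})$. Then the stationary distribution $\pi_{k,i}=\lim_{t\to\infty}\mathbb{P}[\delta(t)=k,\Delta(t)=i]$, $k\in\{-1,0,1\}$, $i\ge1$, of the Markov chain $(\delta(t),\Delta(t))$ is $$\pi_{k,i}=\begin{cases} p_{-1}p_s\big(1+p_f(1-p_{-1})\big), & k=-1,\ i=1,\\ p_{-1}p_sp_f^{\,i-1}F, & k=-1,\ i\ge2,\\ p_kp_s, & k\in\{0,1\},\ i=k+1,\\ p_kp_sp_f(1-p_{-1}), & k\in\{0,1\},\ i=k+2,\\ p_kp_sp_f^{\,i-2-k}F, & k\in\{0,1\},\ i\ge k+3,\end{cases}$$ and $\pi_{k,i}=0$ for $k\in\{0,1\}$, $1\le i\le k$.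
   Context: Model: $h(t)=1$ means successful decoding at the receiver in slot $t$; $\delta(t)\in\{-1,0,1\}$ is the random clock drift (in slots) of the receiver's clock relative to the transmitter's clock in slot $t$; $\Delta(t)$ is the age of information at the receiver. *)

(* Defs.v *)
From Stdlib Require Import Reals ZArith Lra Lia List.
Import ListNotations.
Open Scope R_scope.

Definition pk (pm p0 p1 : R) (k : Z) : R :=
  if Z.eqb k (-1) then pm else if Z.eqb k 0 then p0 else if Z.eqb k 1 then p1 else 0.

Definition ind (b : bool) : R := if b then 1 else 0.

Definition drifts : list Z := [(-1)%Z; 0%Z; 1%Z].

Definition fail_step (k' : Z) (j : nat) (k : Z) (i : nat) : bool :=
  Z.eqb (Z.max 1 (Z.of_nat j + k - k' + 1)) (Z.of_nat i).

(* Joint law  law t k i = P[delta(t) = k, Delta(t) = i], computed by the exact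
   one-step recursion of the process, starting from an arbitrary initial law
   mu0 of (delta(0), Delta(0)).  Since h(t) and delta(t) are independent of each
   other and of the past,
     P[delta(t)=k, Delta(t)=i]
       = p_k p_s [i = max{1,k+1}]
       + p_k p_f sum_{k' in {-1,0,1}} sum_{j>=1} P[delta(t-1)=k',Delta(t-1)=j]
                                           [max{1, j+k-k'+1} = i].
   Only j <= i+1 can satisfy max{1, j+k-k'+1} = i (as k - k' >= -2), so the inner
   sum over j is taken over j = 1 .. i+2 (finite, exact). *)
Fixpoint law (ps pm p0 p1 : R) (mu0 : Z -> nat -> R) (t : nat) (k : Z) (i : nat)
  : R :=
  match t with
  | O => mu0 k i
  | S t' =>
      pk pm p0 p1 k *
      (ps * ind (Z.eqb (Z.of_nat i) (Z.max 1 (k + 1)))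
       + (1 - ps) *
         fold_right Rplus 0
           (map (fun k' =>
              sum_f_R0 (fun n => law ps pm p0 p1 mu0 t' k' (S n)
                                 * ind (fail_step k' (S n) k i)) (S i))
              drifts))
  end.

Definition pi_stat (ps pm p0 p1 : R) (k : Z) (i : nat) : R :=
  let pf := 1 - ps in
  let F := 1 - ps * (1 - pm) in
  if Z.eqb k (-1) then
    (if Nat.eqb i 1 then pm * ps * (1 + pf * (1 - pm))
     else pm * ps * pf ^ (i - 1) * F)
  else
    let kn := Z.to_nat k in
    let p := pk pm p0 p1 k in
    if Nat.leb i kn then 0
    else if Nat.eqb i (kn + 1) then p * ps
    else if Nat.eqb i (kn + 2) then p * ps * pf * (1 - pm)
    else p * ps * pf ^ (i - 2 - kn) * F.

(* Main.v *)
Require Import Defs.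
From Stdlib Require Import Reals ZArith Lra Lia List.
Import ListNotations.
Import Defs.
Open Scope R_scope.

Definition G (d : Z -> nat -> R) (k : Z) (i : nat) : R :=
  fold_right Rplus 0
    (map (fun k' => sum_f_R0 (fun n => d k' (S n) * ind (fail_step k' (S n) k i)) (S i))
       drifts).

Lemma law_S ps pm p0 p1 mu0 t k i :
  law ps pm p0 p1 mu0 (S t) k i =
  pk pm p0 p1 k * (ps * ind (Z.eqb (Z.of_nat i) (Z.max 1 (k + 1)))
    + (1 - ps) * G (law ps pm p0 p1 mu0 t) k i).
Proof. reflexivity. Qed.

Lemma sum_zero N : sum_f_R0 (fun _ => 0) N = 0.
Proof. induction N; simpl; [|rewrite IHN]; ring. Qed.

Lemma sum_single (h : nat -> R) N n0 : (n0 <= N)%nat ->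
  (forall n, (n <= N)%nat -> n <> n0 -> h n = 0) -> sum_f_R0 h N = h n0.
Proof.
  induction N as [|N IH]; intros Hn Hz.
  - assert (n0 = 0%nat) by lia. subst. reflexivity.
  - simpl. destruct (Nat.eq_dec n0 (S N)) as [->|Hne].
    + rewrite (sum_eq _ (fun _ => 0)).
      * rewrite sum_zero. ring.
      * intros i Hi. apply Hz; lia.
    + rewrite IH by (try lia; intros; apply Hz; lia). rewrite (Hz (S N)) by lia. ring.
Qed.

Lemma fs_iff k' j k i : fail_step k' j k i = true <->
  Z.max 1 (Z.of_nat j + k - k' + 1) = Z.of_nat i.
Proof. unfold fail_step. apply Z.eqb_eq. Qed.

Lemma ind_false b : b = false -> ind b = 0.
Proof. intros ->; reflexivity. Qed.
Lemma ind_true b : b = true -> ind b = 1.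
Proof. intros ->; reflexivity. Qed.

Ltac single n0 :=
  rewrite (sum_single _ _ n0);
  [ | lia | intros ? ? ?; unfold ind; destruct fail_step eqn:E;
            [apply fs_iff in E; lia | ring]].

Lemma stat ps pm p0 p1 k i : pm + p0 + p1 = 1 -> In k drifts -> (1 <= i)%nat ->
  pi_stat ps pm p0 p1 k i = pk pm p0 p1 k * (ps * ind (Z.eqb (Z.of_nat i) (Z.max 1 (k + 1)))
    + (1 - ps) * G (pi_stat ps pm p0 p1) k i).
Proof.
  intros Hsum Hk Hi.
  destruct i as [|[|[|[|[|m]]]]]; [lia| | | | |].
  1-4: destruct Hk as [<-|[<-|[<-|[]]]]; unfold G, pi_stat, ind, fail_step, pk; simpl.
  1-12: replace pm with (1 - p0 - p1) by lra; ring.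
  unfold G; cbn [fold_right map drifts].
  destruct Hk as [<-|[<-|[<-|[]]]];
  rewrite ind_false by (apply Z.eqb_neq; lia).
  - single (S (S (S m))). rewrite ind_true by (apply fs_iff; lia).
    single (S (S (S (S m)))). rewrite ind_true by (apply fs_iff; lia).
    single (S (S (S (S (S m))))). rewrite ind_true by (apply fs_iff; lia).
    unfold pi_stat, pk; simpl. replace pm with (1 - p0 - p1) by lra; ring.
  - single (S (S m)). rewrite ind_true by (apply fs_iff; lia).
    single (S (S (S m))). rewrite ind_true by (apply fs_iff; lia).
    single (S (S (S (S m)))). rewrite ind_true by (apply fs_iff; lia).
    unfold pi_stat, pk; simpl. replace pm with (1 - p0 - p1) by lra; ring.
  - single (S m). rewrite ind_true by (apply fs_iff; lia).
    single (S (S m)). rewrite ind_true by (apply fs_iff; lia).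
    single (S (S (S m))). rewrite ind_true by (apply fs_iff; lia).
    unfold pi_stat, pk; simpl. replace pm with (1 - p0 - p1) by lra; ring.
Qed.
Lemma m01 a b : 0 <= a <= 1 -> 0 <= b <= 1 -> 0 <= a * b <= 1.
Proof. intros; split; nra. Qed.
Lemma pow01 x m : 0 <= x <= 1 -> 0 <= x ^ m <= 1.
Proof. intros H; induction m; simpl; [lra| apply m01; auto]. Qed.

Ltac p01 := repeat (apply m01); (lra || assumption).

Lemma bnd B X L : L = B * X -> 0 <= X <= 1 -> 0 <= B -> L <= 2 * B.
Proof. intros -> HX HB. nra. Qed.

Ltac bt X := match goal with |- _ <= 2 * ?B =>
  apply (bnd B X); [ring | p01 | repeat apply Rmult_le_pos; lra] end.

Lemma pi_bound ps pm p0 p1 k n : 0 < ps < 1 -> 0 <= pm <= 1 -> 0 <= p0 <= 1 -> 0 <= p1 <= 1 ->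
  In k drifts ->
  0 <= pi_stat ps pm p0 p1 k (S n) /\ (1 - ps)^2 * pi_stat ps pm p0 p1 k (S n) <= 2 * (1 - ps) ^ n.
Proof.
  intros Hps Hpm Hp0 Hp1 Hk.
  assert (Hpf : 0 <= 1 - ps <= 1) by lra.
  assert (HF : 0 <= 1 - ps * (1 - pm) <= 1) by (split; nra).
  assert (H1 : 0 <= 1 - pm <= 1) by lra.
  assert (Hps' : 0 <= ps <= 1) by lra.
  destruct n as [|[|[|m]]]; destruct Hk as [<-|[<-|[<-|[]]]]; unfold pi_stat, pk; simpl;
  try (pose proof (pow01 _ m Hpf));
  repeat match goal with |- context [(1 - ps) ^ m] => set (q := (1 - ps) ^ m) in * end.
  all: try (split; nra).
  all: set (pf := 1 - ps) in *; set (F := 1 - ps * (1 - pm)) in *.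
  { split; [apply Rmult_le_pos; nra|]. assert (0 <= pf*pf*pm*ps <= 1) by p01.
    assert (0 <= pf*pf*pm*ps*(1-pm) <= 1) by p01. nra. }
  all: split; [repeat apply Rmult_le_pos; lra|].
  all: match goal with |- _ <= 2 * ?B => idtac end.
  bt (pf*(pf*1)*(p0*ps)).
  bt (pf*pf*pm*ps*F).
  bt (pf*pf*p0*ps*(1-pm)).
  bt (pf*p1*ps).
  bt (pf*pf*pm*ps*F).
  bt (pf*p0*ps*F).
  bt (pf*p1*ps*(1-pm)).
  bt (pf*pf*pm*ps*F).
  bt (pf*p0*ps*F).
  bt (p1*ps*F).
Qed.

Lemma sum_extend (f : nat -> R) m M : (m <= M)%nat -> (forall n, 0 <= f n) ->
  sum_f_R0 f m <= sum_f_R0 f M.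
Proof.
  intros Hm Hf. replace M with (m + (M - m))%nat by lia.
  generalize (M - m)%nat as p. induction p.
  - rewrite Nat.add_0_r; lra.
  - rewrite Nat.add_succ_r, tech5. specialize (Hf (S (m + p))). lra.
Qed.

Lemma term_le (f : nat -> R) n N : (n <= N)%nat -> (forall n, 0 <= f n) ->
  f n <= sum_f_R0 f N.
Proof.
  intros Hn Hf. apply Rle_trans with (sum_f_R0 f n); [|apply sum_extend; auto].
  destruct n; simpl; [lra|]. pose proof (cond_pos_sum f n Hf). lra.
Qed.

Lemma swap (f : nat -> nat -> R) N M :
  sum_f_R0 (fun n => sum_f_R0 (fun m => f n m) M) N =
  sum_f_R0 (fun m => sum_f_R0 (fun n => f n m) N) M.
Proof.
  induction N as [|N IH]; simpl; [reflexivity|].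
  rewrite IH, <- plus_sum. reflexivity.
Qed.

Lemma ind_nonneg b : 0 <= ind b.
Proof. destruct b; simpl; lra. Qed.

Lemma ind_sum_le1 (P : nat -> bool) N :
  (forall a b, P a = true -> P b = true -> a = b) ->
  sum_f_R0 (fun n => ind (P n)) N <= 1.
Proof.
  intros HP. induction N as [|N IH]; simpl.
  - destruct (P 0%nat); simpl; lra.
  - destruct (P (S N)) eqn:E; simpl.
    + rewrite (sum_eq _ (fun _ => 0)); [rewrite sum_zero; lra|].
      intros i Hi. destruct (P i) eqn:E2; [|reflexivity].
      specialize (HP _ _ E E2). lia.
    + lra.
Qed.

Definition Gm (e : Z -> nat -> R) (k : Z) (i : nat) (M : nat) : R :=
  sum_f_R0 (fun n => e (-1)%Z (S n) * ind (fail_step (-1)%Z (S n) k i)) M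
  + sum_f_R0 (fun n => e 0%Z (S n) * ind (fail_step 0%Z (S n) k i)) M
  + sum_f_R0 (fun n => e 1%Z (S n) * ind (fail_step 1%Z (S n) k i)) M.

Definition Sd (e : Z -> nat -> R) (M : nat) : R :=
  sum_f_R0 (fun n => e (-1)%Z (S n) + e 0%Z (S n) + e 1%Z (S n)) M.

Lemma G_le_Gm e k i M : (forall a b, 0 <= e a b) -> (S i <= M)%nat -> G e k i <= Gm e k i M.
Proof.
  intros He HM. unfold G, Gm; cbn [fold_right map drifts].
  assert (forall k', sum_f_R0 (fun n => e k' (S n) * ind (fail_step k' (S n) k i)) (S i)
     <= sum_f_R0 (fun n => e k' (S n) * ind (fail_step k' (S n) k i)) M).
  { intros k'. apply sum_extend; auto. intros n. apply Rmult_le_pos; auto. apply ind_nonneg. }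
  pose proof (H (-1)%Z); pose proof (H 0%Z); pose proof (H 1%Z). lra.
Qed.

Lemma comp e k' k N M : (forall a b, 0 <= e a b) ->
  sum_f_R0 (fun n => sum_f_R0 (fun n' => e k' (S n') * ind (fail_step k' (S n') k (S n))) M) N
  <= sum_f_R0 (fun n' => e k' (S n')) M.
Proof.
  intros He. rewrite swap. apply sum_Rle. intros n' _.
  rewrite (sum_eq _ (fun n => ind (fail_step k' (S n') k (S n)) * e k' (S n'))) by (intros; ring).
  rewrite <- scal_sum.
  assert (sum_f_R0 (fun n => ind (fail_step k' (S n') k (S n))) N <= 1).
  { apply ind_sum_le1. intros a b Ha Hb. apply fs_iff in Ha. apply fs_iff in Hb. lia. }
  pose proof (He k' (S n')). nra.
Qed.

Lemma Gm_sum e k N M : (forall a b, 0 <= e a b) ->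
  sum_f_R0 (fun n => Gm e k (S n) M) N <= Sd e M.
Proof.
  intros He. unfold Gm, Sd. rewrite !plus_sum.
  pose proof (comp e (-1)%Z k N M He). pose proof (comp e 0%Z k N M He).
  pose proof (comp e 1%Z k N M He). lra.
Qed.

Lemma lin3 c a b d (X Y Z : nat -> R) N :
  sum_f_R0 (fun n => c * (a * X n + b * Y n + d * Z n)) N =
  c * (a * sum_f_R0 X N + b * sum_f_R0 Y N + d * sum_f_R0 Z N).
Proof. induction N; simpl; [ring| rewrite IHN; ring]. Qed.

Lemma G_diff a b k i :
  Rabs (G a k i - G b k i) <= G (fun x y => Rabs (a x y - b x y)) k i.
Proof.
  unfold G; cbn [fold_right map drifts].
  assert (forall k', Rabs (sum_f_R0 (fun n => a k' (S n) * ind (fail_step k' (S n) k i)) (S i)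
     - sum_f_R0 (fun n => b k' (S n) * ind (fail_step k' (S n) k i)) (S i))
     <= sum_f_R0 (fun n => Rabs (a k' (S n) - b k' (S n)) * ind (fail_step k' (S n) k i)) (S i)).
  { intros k'. rewrite <- minus_sum. eapply Rle_trans; [apply Rsum_abs|].
    apply sum_Rle. intros n _.
    replace (a k' (S n) * ind (fail_step k' (S n) k i) - b k' (S n) * ind (fail_step k' (S n) k i))
      with ((a k' (S n) - b k' (S n)) * ind (fail_step k' (S n) k i)) by ring.
    rewrite Rabs_mult, (Rabs_pos_eq (ind _)) by apply ind_nonneg. lra. }
  set (A1 := sum_f_R0 _ _). set (A2 := sum_f_R0 _ _). set (A3 := sum_f_R0 _ _).
  set (B1 := sum_f_R0 _ _). set (B2 := sum_f_R0 _ _). set (B3 := sum_f_R0 _ _).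
  pose proof (H (-1)%Z). pose proof (H 0%Z). pose proof (H 1%Z).
  fold A1 A2 A3 B1 B2 B3 in H0, H1, H2.
  replace (A1 + (A2 + (A3 + 0)) - (B1 + (B2 + (B3 + 0))))
    with ((A1 - B1) + ((A2 - B2) + (A3 - B3))) by ring.
  pose proof (Rabs_triang (A1 - B1) ((A2 - B2) + (A3 - B3))).
  pose proof (Rabs_triang (A2 - B2) (A3 - B3)). lra.
Qed.

Lemma mu_partial (mu0 : Z -> nat -> R) M :
  (forall k i, 0 <= mu0 k i) ->
  infinite_sum (fun n => mu0 (-1)%Z (S n) + mu0 0%Z (S n) + mu0 1%Z (S n)) 1 ->
  sum_f_R0 (fun n => mu0 (-1)%Z (S n) + mu0 0%Z (S n) + mu0 1%Z (S n)) M <= 1.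
Proof.
  intros Hn Hs. apply growing_ineq; [|exact Hs].
  intros n. simpl. pose proof (Hn (-1)%Z (S (S n))). pose proof (Hn 0%Z (S (S n))).
  pose proof (Hn 1%Z (S (S n))). lra.
Qed.

Lemma geom_bound ps M : 0 < ps < 1 -> sum_f_R0 (fun n => (1 - ps) ^ n) M * ps <= 1.
Proof.
  intros H. pose proof (GP_finite (1 - ps) M).
  assert (0 <= (1 - ps) ^ (M + 1)) by (apply pow_le; lra).
  replace (sum_f_R0 (fun n => (1 - ps) ^ n) M * ps)
    with (- (sum_f_R0 (fun n => (1 - ps) ^ n) M * (1 - ps - 1))) by ring.
  lra.
Qed.

Lemma pi_partial ps pm p0 p1 M : 0 < ps < 1 -> 0 <= pm <= 1 -> 0 <= p0 <= 1 -> 0 <= p1 <= 1 ->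
  sum_f_R0 (fun n => pi_stat ps pm p0 p1 (-1)%Z (S n) + pi_stat ps pm p0 p1 0%Z (S n)
     + pi_stat ps pm p0 p1 1%Z (S n)) M <= 6 / ((1 - ps) ^ 2 * ps).
Proof.
  intros Hps Hpm Hp0 Hp1.
  assert (HK : 0 < (1 - ps) ^ 2 * ps) by (apply Rmult_lt_0_compat; [apply pow_lt|]; lra).
  apply (Rmult_le_reg_r ((1 - ps) ^ 2 * ps)); [exact HK|].
  replace (6 / ((1 - ps) ^ 2 * ps) * ((1 - ps) ^ 2 * ps)) with 6 by (field; lra).
  match goal with |- ?S * _ <= _ =>
    replace (S * ((1 - ps) ^ 2 * ps)) with (((1 - ps) ^ 2 * S) * ps) by ring end.
  rewrite scal_sum.
  apply Rle_trans with (sum_f_R0 (fun n => 6 * (1 - ps) ^ n) M * ps).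
  - apply Rmult_le_compat_r; [lra|]. apply sum_Rle. intros n _.
    destruct (pi_bound ps pm p0 p1 (-1)%Z n) as [_ A]; auto; [simpl; auto|].
    destruct (pi_bound ps pm p0 p1 0%Z n) as [_ B]; auto; [simpl; auto|].
    destruct (pi_bound ps pm p0 p1 1%Z n) as [_ C]; auto; [simpl; auto|]. lra.
  - rewrite (sum_eq _ (fun n => (1 - ps) ^ n * 6)) by (intros; ring).
    rewrite <- (scal_sum (fun n => (1 - ps) ^ n) M 6) .
    pose proof (geom_bound ps M Hps). 
    replace (6 * sum_f_R0 (fun n => (1 - ps) ^ n) M * ps) with (6 * (sum_f_R0 (fun n => (1 - ps) ^ n) M * ps)) by ring.
    lra.
Qed.

Theorem lemma3 (ps pm p0 p1 : R) (mu0 : Z -> nat -> R)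
  (Hps : 0 < ps < 1)
  (Hpm : 0 <= pm <= 1) (Hp0 : 0 <= p0 <= 1) (Hp1 : 0 <= p1 <= 1)
  (Hsum : pm + p0 + p1 = 1)
  (Hmu0_nonneg : forall k i, 0 <= mu0 k i)
  (Hmu0_supp : forall k i, (i = 0%nat \/ ~ List.In k drifts) -> mu0 k i = 0)
  (Hmu0_mass : infinite_sum
                 (fun n => mu0 (-1)%Z (S n) + mu0 0%Z (S n) + mu0 1%Z (S n)) 1) :
  forall (k : Z) (i : nat), List.In k drifts -> (1 <= i)%nat ->
    Un_cv (fun t => law ps pm p0 p1 mu0 t k i) (pi_stat ps pm p0 p1 k i).
Proof.
  intros k i Hk Hi.
  set (e := fun t a b => Rabs (law ps pm p0 p1 mu0 t a b - pi_stat ps pm p0 p1 a b)).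
  assert (He : forall t a b, 0 <= e t a b) by (intros; apply Rabs_pos).
  assert (Hpk : forall k, In k drifts -> 0 <= pk pm p0 p1 k)
    by (intros k0 [<-|[<-|[<-|[]]]]; unfold pk; simpl; lra).
  assert (Em : pk pm p0 p1 (-1)%Z = pm) by reflexivity.
  assert (E0 : pk pm p0 p1 0%Z = p0) by reflexivity.
  assert (E1 : pk pm p0 p1 1%Z = p1) by reflexivity.
  assert (Hstep : forall t k j, In k drifts -> (1 <= j)%nat ->
     e (S t) k j <= pk pm p0 p1 k * (1 - ps) * G (e t) k j).
  { intros t k0 j Hk0 Hj. unfold e. rewrite law_S.
    rewrite (stat ps pm p0 p1 k0 j Hsum Hk0 Hj).
    set (g1 := G (law ps pm p0 p1 mu0 t) k0 j).
    set (g2 := G (pi_stat ps pm p0 p1) k0 j).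
    set (c := ind _).
    replace (pk pm p0 p1 k0 * (ps * c + (1 - ps) * g1) - pk pm p0 p1 k0 * (ps * c + (1 - ps) * g2))
      with (pk pm p0 p1 k0 * (1 - ps) * (g1 - g2)) by ring.
    assert (0 <= pk pm p0 p1 k0 * (1 - ps)) by (apply Rmult_le_pos; [auto|lra]).
    rewrite Rabs_mult, (Rabs_pos_eq (pk pm p0 p1 k0 * (1 - ps))) by auto.
    apply Rmult_le_compat_l; auto. exact (G_diff _ _ k0 j). }
  assert (Hcontr : forall t N, Sd (e (S t)) N <= (1 - ps) * Sd (e t) (S (S N))).
  { intros t N. unfold Sd at 1.
    eapply Rle_trans.
    { apply sum_Rle with (Bn := fun n => (1 - ps) * (pm * Gm (e t) (-1)%Z (S n) (S (S N))
         + p0 * Gm (e t) 0%Z (S n) (S (S N)) + p1 * Gm (e t) 1%Z (S n) (S (S N)))).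
      intros n Hn.
      assert (Hb : forall k0, In k0 drifts ->
        e (S t) k0 (S n) <= pk pm p0 p1 k0 * (1 - ps) * Gm (e t) k0 (S n) (S (S N))).
      { intros k0 Hk0. eapply Rle_trans; [apply Hstep; auto; lia|].
        apply Rmult_le_compat_l; [apply Rmult_le_pos; [auto|lra]|].
        apply G_le_Gm; auto; lia. }
      pose proof (Hb (-1)%Z ltac:(simpl; auto)).
      pose proof (Hb 0%Z ltac:(simpl; auto)).
      pose proof (Hb 1%Z ltac:(simpl; auto)).
      rewrite Em, E0, E1 in *. lra. }
    rewrite lin3.
    pose proof (Gm_sum (e t) (-1)%Z N (S (S N)) (He t)).
    pose proof (Gm_sum (e t) 0%Z N (S (S N)) (He t)).
    pose proof (Gm_sum (e t) 1%Z N (S (S N)) (He t)).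
    apply Rmult_le_compat_l; [lra|].
    set (S0 := Sd (e t) (S (S N))) in *.
    replace S0 with (pm * S0 + p0 * S0 + p1 * S0) by nra.
    pose proof (Rmult_le_compat_l pm _ _ (proj1 Hpm) H).
    pose proof (Rmult_le_compat_l p0 _ _ (proj1 Hp0) H0).
    pose proof (Rmult_le_compat_l p1 _ _ (proj1 Hp1) H1). lra. }
  assert (Hiter : forall t N, Sd (e t) N <= (1 - ps) ^ t * Sd (e 0%nat) (N + 2 * t)).
  { induction t as [|t IH]; intros N.
    - simpl. rewrite Nat.add_0_r. lra.
    - eapply Rle_trans; [apply Hcontr|].
      specialize (IH (S (S N))).
      replace (S (S N) + 2 * t)%nat with (N + 2 * S t)%nat in IH by lia.
      simpl pow. rewrite Rmult_assoc. apply Rmult_le_compat_l; [lra|exact IH]. }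
  set (C := 1 + 6 / ((1 - ps) ^ 2 * ps)).
  assert (HC0 : forall M, Sd (e 0%nat) M <= C).
  { intros M. unfold Sd, e, C. simpl law.
    eapply Rle_trans.
    { apply sum_Rle with (Bn := fun n =>
        (mu0 (-1)%Z (S n) + mu0 0%Z (S n) + mu0 1%Z (S n)) +
        (pi_stat ps pm p0 p1 (-1)%Z (S n) + pi_stat ps pm p0 p1 0%Z (S n)
          + pi_stat ps pm p0 p1 1%Z (S n))).
      intros n _.
      assert (Hab : forall k0, In k0 drifts ->
        Rabs (mu0 k0 (S n) - pi_stat ps pm p0 p1 k0 (S n)) <=
        mu0 k0 (S n) + pi_stat ps pm p0 p1 k0 (S n)).
      { intros k0 Hk0. destruct (pi_bound ps pm p0 p1 k0 n) as [P _]; auto.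
        pose proof (Hmu0_nonneg k0 (S n)).
        unfold Rabs; destruct Rcase_abs; lra. }
      pose proof (Hab (-1)%Z ltac:(simpl; auto)).
      pose proof (Hab 0%Z ltac:(simpl; auto)).
      pose proof (Hab 1%Z ltac:(simpl; auto)). lra. }
    rewrite plus_sum.
    pose proof (mu_partial mu0 M Hmu0_nonneg Hmu0_mass).
    pose proof (pi_partial ps pm p0 p1 M Hps Hpm Hp0 Hp1). lra. }
  assert (HCpos : 0 < C).
  { unfold C. assert (0 < (1 - ps) ^ 2 * ps) by (apply Rmult_lt_0_compat; [apply pow_lt|]; lra).
    assert (0 < 6 / ((1 - ps) ^ 2 * ps)) by (apply Rdiv_lt_0_compat; lra). lra. }
  assert (Hfin : forall t, e t k i <= (1 - ps) ^ t * C).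
  { intros t. destruct i as [|n]; [lia|].
    eapply Rle_trans.
    2:{ eapply Rle_trans; [apply (Hiter t n)|].
        apply Rmult_le_compat_l; [apply pow_le; lra| apply HC0]. }
    unfold Sd.
    eapply Rle_trans; [|apply (term_le (fun n => e t (-1)%Z (S n) + e t 0%Z (S n) + e t 1%Z (S n)) n n)];
      [| lia | intros; pose proof (He t (-1)%Z (S n0)); pose proof (He t 0%Z (S n0));
               pose proof (He t 1%Z (S n0)); lra].
    simpl. pose proof (He t (-1)%Z (S n)); pose proof (He t 0%Z (S n)); pose proof (He t 1%Z (S n)).
    destruct Hk as [<-|[<-|[<-|[]]]]; lra. }
  intros eps Heps.
  assert (Hpf : Rabs (1 - ps) < 1) by (rewrite Rabs_pos_eq; lra).
  destruct (pow_lt_1_zero (1 - ps) Hpf (eps / C)) as [N HN].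
  { apply Rdiv_lt_0_compat; lra. }
  exists N. intros t Ht. specialize (HN t Ht).
  rewrite Rabs_pos_eq in HN by (apply pow_le; lra).
  unfold Rdist. pose proof (Hfin t). unfold e in H.
  apply Rle_lt_trans with ((1 - ps) ^ t * C); [exact H|].
  apply (Rmult_lt_compat_r C) in HN; [|exact HCpos].
  replace (eps / C * C) with eps in HN by (field; lra). exact HN.
Qed.
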